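(* There exist a complex vector field $B=(B_1,B_2)$ on $\mathbb{T}^2\times\mathbb{R}^+$ with values in $\mathbb{C}^2$, continuous and uniformly bounded, and a non-zero, uniformly $C^2$, complex-valued function $u$ on $\mathbb{T}^2\times\mathbb{R}^+$ such that $$\dot u=\Delta u+B\cdot\nabla u=\partial_x^2u+\partial_y^2u+B_1\partial_xu+B_2\partial_yu\quad\text{in }\mathbb{T}^2\times\mathbb{R}^+,$$ and $u$ has double exponential decay: there is a numerical constant $c>0$ such that for all sufficiently large $T$, $$\sup_{\mathbb{T}^2\times\{t\ge T\}}|u(x,y,t)|\le e^{-ce^{cT}}.$$
   Context: $\mathbb{T}^2=(\mathbb{R}/2\pi\mathbb{Z})^2$ with coordinates $(x,y)$; $t\ge0$ is the third coordinate. $\dot u=\partial_tu$; $\Delta$ and $\nabla$ involve only the spatial variables $(x,y)$. Uniformly $C^2$ means all partial derivatives in $(x,y,t)$ of order at most $2$ are continuous and bounded. *)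

(* Defs.v *)
From Stdlib Require Import Reals.
From Coquelicot Require Import Coquelicot.
Open Scope R_scope.

(* A function on R^3 = (x,y,t), complex valued. Points of T^2 x [0,oo) are
   represented by (x,y,t) with t >= 0 and periodicity in x and y. *)
Definition fun3 := R -> R -> R -> C.

Definition line (i : nat) (f : fun3) (x y t : R) : R -> C :=
  match i with
  | O => fun s => f s y t
  | S O => fun s => f x s t
  | _ => fun s => f x y s
  end.

Definition coord (i : nat) (x y t : R) : R :=
  match i with O => x | S O => y | _ => t end.

Definition is_partial (i : nat) (f g : fun3) : Prop :=
  forall x y t : R, is_derive (line i f x y t) (coord i x y t) (g x y t).

Definition cont3 (f : fun3) : Prop :=
  forall x y t : R,
    continuous (fun p : R * R * R => f (fst (fst p)) (snd (fst p)) (snd p)) (x, y, t).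

Definition bounded_half (f : fun3) : Prop :=
  exists M : R, forall x y t : R, 0 <= t -> Cmod (f x y t) <= M.

Definition periodic2 (f : fun3) : Prop :=
  forall x y t : R, f (x + 2 * PI) y t = f x y t /\ f x (y + 2 * PI) t = f x y t.

Definition unif_C2 (f : fun3) : Prop :=
  cont3 f /\ bounded_half f /\
  exists (D : nat -> fun3) (DD : nat -> nat -> fun3),
    forall i : nat, (i < 3)%nat ->
      is_partial i f (D i) /\ cont3 (D i) /\ bounded_half (D i) /\
      forall j : nat, (j < 3)%nat ->
        is_partial j (D i) (DD i j) /\ cont3 (DD i j) /\ bounded_half (DD i j).

(* Main.v *)
Require Import Defs.
From Stdlib Require Import Reals Lra Lia ZArith.
From Coquelicot Require Import Coquelicot.
From Stdlib Require Import List.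
Import ListNotations.
Open Scope R_scope.

Lemma is_derive_pair (f g : R -> R) (x a b : R) :
  is_derive f x a -> is_derive g x b ->
  is_derive (fun t => ((f t, g t) : C)) x ((a, b) : C).
Proof.
  intros Hf Hg.
  unfold is_derive.
  apply (filterdiff_comp'_2 f g (fun u v => ((u, v) : C)) x
           (fun y => scal y a) (fun y => scal y b) (fun u v => ((u,v) : C)) Hf Hg).
  apply filterdiff_ext_lin with (fun t => t).
  apply filterdiff_ext with (fun t => t).
  intros [p q]; reflexivity.
  apply filterdiff_id.
  intros [p q]; reflexivity.
Qed.

Lemma derive_glue {V : NormedModule R_AbsRing} (f f1 f2 : R -> V) (t0 : R) (l : V) :
  locally t0 (fun t => f t = f1 t \/ f t = f2 t) ->
  f1 t0 = f t0 -> f2 t0 = f t0 ->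
  is_derive f1 t0 l -> is_derive f2 t0 l -> is_derive f t0 l.
Proof.
  intros Hloc E1 E2 [Hl1 D1] [_ D2].
  split; [exact Hl1|].
  intros x Hx.
  pose proof (is_filter_lim_locally_unique _ _ Hx) as Hx0. subst x.
  intros eps.
  generalize (filter_and _ _ Hloc (filter_and _ _ (D1 t0 Hx eps) (D2 t0 Hx eps))).
  apply filter_imp.
  intros t [[H|H] [H1 H2]]; rewrite H; [rewrite <- E1 | rewrite <- E2]; assumption.
Qed.

Lemma cont_glue {U V : UniformSpace} (f f1 f2 : U -> V) (p : U) :
  locally p (fun q => f q = f1 q \/ f q = f2 q) ->
  f1 p = f p -> f2 p = f p ->
  continuous f1 p -> continuous f2 p -> continuous f p.
Proof.
  intros Hloc E1 E2 C1 C2.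
  intros P HP.
  rewrite <- E1 in HP. pose proof (C1 P HP) as H1.
  rewrite E1, <- E2 in HP. pose proof (C2 P HP) as H2.
  unfold filtermap in *.
  generalize (filter_and _ _ Hloc (filter_and _ _ H1 H2)).
  apply filter_imp. intros q [[H|H] [A B]]; rewrite H; assumption.
Qed.


Definition th t := exp t + 1.
Definition om := PI / 2.
Definition cc t := cos (om * th t).
Definition ss t := sin (om * th t).
Definition GG t := exp (- (th t * th t) / 2).
Definition ra t := cc t ^ 4 * GG t.
Definition Pa t := 4 * om * cc t ^ 3 * ss t + th t * cc t ^ 4.
Definition ra1 t := - exp t * Pa t * GG t.
Definition Pa' t := 4 * om * (om * exp t * cc t ^ 4 - 3 * om * exp t * cc t ^ 2 * ss t ^ 2)
   + exp t * cc t ^ 4 - 4 * th t * om * exp t * cc t ^ 3 * ss t.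
Definition ra2 t := - exp t * GG t * (Pa t + Pa' t - th t * exp t * Pa t).

Lemma d_ra t : is_derive ra t (ra1 t).
Proof.
  unfold ra, ra1, Pa, cc, ss, GG, th.
  auto_derive; auto.
  match goal with |- ?a = ?b => change (@eq R a b) end; unfold Rdiv. field.
Qed.
Lemma d_ra1 t : is_derive ra1 t (ra2 t).
Proof.
  unfold ra1, ra2, Pa, Pa', cc, ss, GG, th.
  auto_derive; auto.
  match goal with |- ?a = ?b => change (@eq R a b) end; unfold Rdiv. field.
Qed.

Definition rb t := ss t ^ 4 * GG t.
Definition Pb t := 4 * om * ss t ^ 3 * cc t - th t * ss t ^ 4.
Definition rb1 t := exp t * Pb t * GG t.
Definition Pb' t := 4 * om * (3 * om * exp t * ss t ^ 2 * cc t ^ 2 - om * exp t * ss t ^ 4)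
   - exp t * ss t ^ 4 - 4 * th t * om * exp t * ss t ^ 3 * cc t.
Definition rb2 t := exp t * GG t * (Pb t + Pb' t - th t * exp t * Pb t).

Lemma d_rb t : is_derive rb t (rb1 t).
Proof.
  unfold rb, rb1, Pb, cc, ss, GG, th.
  auto_derive; auto.
  match goal with |- ?a = ?b => change (@eq R a b) end; unfold Rdiv; field.
Qed.
Lemma d_rb1 t : is_derive rb1 t (rb2 t).
Proof.
  unfold rb1, rb2, Pb, Pb', cc, ss, GG, th.
  auto_derive; auto.
  match goal with |- ?a = ?b => change (@eq R a b) end; unfold Rdiv; field.
Qed.

Lemma van_a t : cc t = 0 -> ra t = 0 /\ ra1 t = 0 /\ ra2 t = 0.
Proof. intros H. unfold ra, ra1, ra2, Pa, Pa'. rewrite H. repeat split; ring. Qed.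
Lemma van_b t : ss t = 0 -> rb t = 0 /\ rb1 t = 0 /\ rb2 t = 0.
Proof. intros H. unfold rb, rb1, rb2, Pb, Pb'. rewrite H. repeat split; ring. Qed.


Definition fl (z : R) : Z := (up z - 1)%Z.
Definition lfl (z : R) : Z := (- up (- z))%Z.

Lemma fl_spec z : IZR (fl z) <= z < IZR (fl z) + 1.
Proof.
  unfold fl. destruct (archimed z) as [H1 H2].
  rewrite minus_IZR. lra.
Qed.

Lemma lfl_spec z : IZR (lfl z) < z <= IZR (lfl z) + 1.
Proof.
  unfold lfl. destruct (archimed (- z)) as [H1 H2].
  rewrite opp_IZR. lra.
Qed.

Lemma fl_unique k w : IZR k <= w < IZR k + 1 -> fl w = k.
Proof.
  intros [H1 H2]. unfold fl.
  rewrite <- (tech_up w (k + 1)); [lia| |]; rewrite plus_IZR; lra.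
Qed.

Lemma lfl_jump z : lfl z <> fl z -> z = IZR (fl z).
Proof.
  intros H. pose proof (fl_spec z). pose proof (lfl_spec z).
  assert (A : (lfl z < fl z + 1)%Z).
  { apply lt_IZR. rewrite plus_IZR. lra. }
  assert (B : (fl z <= lfl z + 1)%Z).
  { apply le_IZR. rewrite plus_IZR. lra. }
  assert (Hk : (lfl z = fl z - 1)%Z) by lia.
  assert (E : IZR (lfl z) = IZR (fl z) - 1) by (rewrite Hk, minus_IZR; reflexivity).
  lra.
Qed.

Lemma loc_floor (g : R -> R) (t0 : R) :
  continuous g t0 -> (forall t, t < t0 -> g t < g t0) -> (forall t, t0 <= t -> g t0 <= g t) ->
  locally t0 (fun t => (t0 <= t -> fl (g t) = fl (g t0)) /\ (t < t0 -> fl (g t) = lfl (g t0))).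
Proof.
  intros Hc Hlt Hle.
  pose proof (fl_spec (g t0)) as F. pose proof (lfl_spec (g t0)) as L.
  assert (He : 0 < Rmin (IZR (fl (g t0)) + 1 - g t0) (g t0 - IZR (lfl (g t0)))).
  { apply Rmin_pos; lra. }
  pose proof (proj1 (filterlim_locally g (g t0)) Hc (mkposreal _ He)) as H.
  revert H. apply filter_imp.
  intros t Hb. simpl in Hb. unfold ball in Hb; simpl in Hb. unfold AbsRing_ball, abs, minus, plus, opp in Hb; simpl in Hb.
  pose proof (Rmin_l (IZR (fl (g t0)) + 1 - g t0) (g t0 - IZR (lfl (g t0)))).
  pose proof (Rmin_r (IZR (fl (g t0)) + 1 - g t0) (g t0 - IZR (lfl (g t0)))).
  apply Rabs_def2 in Hb. destruct Hb as [Hb1 Hb2].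
  split; intros Ht.
  - apply fl_unique. specialize (Hle t Ht). lra.
  - apply fl_unique. specialize (Hlt t Ht). lra.
Qed.


Definition Mf t := 2 * IZR (fl ((th t + 1) / 2)).
Definition Nf t := 2 * IZR (fl (th t / 2)) + 1.
Definition MLf t := 2 * IZR (lfl ((th t + 1) / 2)).
Definition NLf t := 2 * IZR (lfl (th t / 2)) + 1.


Lemma th_lt a b : a < b -> th a < th b.
Proof. unfold th. intros; apply Rplus_lt_compat_r, exp_increasing; auto. Qed.
Lemma th_le a b : a <= b -> th a <= th b.
Proof. intros [H|H]. left; apply th_lt; auto. subst; lra. Qed.

Lemma loc_MN t0 : locally t0 (fun t => (t0 <= t -> Mf t = Mf t0 /\ Nf t = Nf t0) /\
                                      (t < t0 -> Mf t = MLf t0 /\ Nf t = NLf t0)).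
Proof.
  assert (H1 := loc_floor (fun t => (th t + 1) / 2) t0).
  assert (H2 := loc_floor (fun t => th t / 2) t0).
  simpl in H1, H2.
  assert (C1 : continuous (fun t => (th t + 1) / 2) t0).
  { apply (ex_derive_continuous (K:=R_AbsRing) (V:=R_NormedModule)). unfold th. auto_derive. auto. }
  assert (C2 : continuous (fun t => th t / 2) t0).
  { apply (ex_derive_continuous (K:=R_AbsRing) (V:=R_NormedModule)). unfold th. auto_derive. auto. }
  specialize (H1 C1). specialize (H2 C2).
  assert (L1 : forall t, t < t0 -> (th t + 1)/2 < (th t0 + 1)/2).
  { intros t Ht; pose proof (th_lt _ _ Ht); lra. }
  assert (L2 : forall t, t0 <= t -> (th t0 + 1)/2 <= (th t + 1)/2).
  { intros t Ht; pose proof (th_le _ _ Ht); lra. }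
  assert (L3 : forall t, t < t0 -> th t/2 < th t0/2).
  { intros t Ht; pose proof (th_lt _ _ Ht); lra. }
  assert (L4 : forall t, t0 <= t -> th t0/2 <= th t/2).
  { intros t Ht; pose proof (th_le _ _ Ht); lra. }
  specialize (H1 L1 L2). specialize (H2 L3 L4).
  generalize (filter_and _ _ H1 H2). apply filter_imp.
  intros t [[A1 A2] [B1 B2]]. unfold Mf, Nf, MLf, NLf. split; intros Ht.
  - rewrite (A1 Ht), (B1 Ht). auto.
  - rewrite (A2 Ht), (B2 Ht). auto.
Qed.

Lemma jumpM t : MLf t <> Mf t -> cc t = 0.
Proof.
  unfold MLf, Mf, cc, om. intros H.
  assert (H' : lfl ((th t + 1) / 2) <> fl ((th t + 1) / 2)).
  { intro E; apply H; rewrite E; reflexivity. }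
  apply lfl_jump in H'.
  apply cos_eq_0_1. exists (fl ((th t + 1) / 2) - 1)%Z.
  rewrite minus_IZR. rewrite <- H'. field.
Qed.

Lemma jumpN t : NLf t <> Nf t -> ss t = 0.
Proof.
  unfold NLf, Nf, ss, om. intros H.
  assert (H' : lfl (th t / 2) <> fl (th t / 2)).
  { intro E; apply H; rewrite E; reflexivity. }
  apply lfl_jump in H'.
  apply sin_eq_0_1. exists (fl (th t / 2)).
  rewrite <- H'. field.
Qed.


Definition Sh (p1 q1 p2 q2 : R -> R) (r1 r2 : R -> R) (m n x y t : R) : C :=
  (r1 t * (p1 m * cos (m*x) - q1 m * sin (m*x)) + r2 t * (p2 n * cos (n*y) - q2 n * sin (n*y)),
   r1 t * (p1 m * sin (m*x) + q1 m * cos (m*x)) + r2 t * (p2 n * sin (n*y) + q2 n * cos (n*y))).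
Definition Gl (F : R -> R -> fun3) : fun3 := fun x y t => F (Mf t) (Nf t) x y t.

Ltac rfin := match goal with |- ?a = ?b => change (@eq R a b) end; ring.

Lemma Sh_dx p1 q1 p2 q2 r1 r2 p1' q1' p2' q2' :
  (forall m, p1' m = - q1 m * m) -> (forall m, q1' m = p1 m * m) ->
  (forall n, p2' n = 0) -> (forall n, q2' n = 0) ->
  is_partial 0 (Gl (Sh p1 q1 p2 q2 r1 r2)) (Gl (Sh p1' q1' p2' q2' r1 r2)).
Proof.
  intros E1 E2 E3 E4 x y t. unfold line, coord, Gl, Sh.
  rewrite E1, E2, E3, E4.
  apply is_derive_pair; auto_derive; auto; rfin.
Qed.

Lemma Sh_dy p1 q1 p2 q2 r1 r2 p1' q1' p2' q2' :
  (forall m, p1' m = 0) -> (forall m, q1' m = 0) ->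
  (forall n, p2' n = - q2 n * n) -> (forall n, q2' n = p2 n * n) ->
  is_partial 1 (Gl (Sh p1 q1 p2 q2 r1 r2)) (Gl (Sh p1' q1' p2' q2' r1 r2)).
Proof.
  intros E1 E2 E3 E4 x y t. unfold line, coord, Gl, Sh.
  rewrite E1, E2, E3, E4.
  apply is_derive_pair; auto_derive; auto; rfin.
Qed.

Lemma lin2 (r1 r2 : R -> R) r1' r2' K1 K2 t :
  is_derive r1 t r1' -> is_derive r2 t r2' ->
  is_derive (fun t => r1 t * K1 + r2 t * K2) t (r1' * K1 + r2' * K2).
Proof.
  intros H1 H2.
  apply (is_derive_plus (V:=R_NormedModule) (fun t => r1 t * K1) (fun t => r2 t * K2)).
  - apply (is_derive_scal_l (V:=R_NormedModule) r1 t r1' K1 H1).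
  - apply (is_derive_scal_l (V:=R_NormedModule) r2 t r2' K2 H2).
Qed.

Lemma Sh_branch_eq p1 q1 p2 q2 r1 r2 x y t :
  (MLf t <> Mf t -> r1 t = 0) -> (NLf t <> Nf t -> r2 t = 0) ->
  Sh p1 q1 p2 q2 r1 r2 (MLf t) (NLf t) x y t = Sh p1 q1 p2 q2 r1 r2 (Mf t) (Nf t) x y t.
Proof.
  intros H1 H2. unfold Sh.
  destruct (Req_dec (MLf t) (Mf t)) as [E|E]; destruct (Req_dec (NLf t) (Nf t)) as [E'|E'].
  - rewrite E, E'; auto.
  - rewrite E, (H2 E'). f_equal; rfin.
  - rewrite E', (H1 E). f_equal; rfin.
  - rewrite (H1 E), (H2 E'). f_equal; rfin.
Qed.

Lemma locally_snd (x y t0 : R) (P : R -> Prop) :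
  locally t0 P -> locally (x, y, t0) (fun p : R * R * R => P (snd p)).
Proof.
  intros H. apply (continuous_snd (x, y) t0 P H).
Qed.

Lemma Sh_dt p1 q1 p2 q2 r1 r2 r1' r2' :
  (forall t, is_derive r1 t (r1' t)) -> (forall t, is_derive r2 t (r2' t)) ->
  (forall t, MLf t <> Mf t -> r1 t = 0 /\ r1' t = 0) ->
  (forall t, NLf t <> Nf t -> r2 t = 0 /\ r2' t = 0) ->
  is_partial 2 (Gl (Sh p1 q1 p2 q2 r1 r2)) (Gl (Sh p1 q1 p2 q2 r1' r2')).
Proof.
  intros D1 D2 J1 J2 x y t0. unfold line, coord, Gl.
  assert (Br : forall m n, is_derive (fun t => Sh p1 q1 p2 q2 r1 r2 m n x y t) t0
                             (Sh p1 q1 p2 q2 r1' r2' m n x y t0)).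
  { intros m n. unfold Sh. apply is_derive_pair; apply lin2; auto. }
  apply (derive_glue _ (fun t => Sh p1 q1 p2 q2 r1 r2 (Mf t0) (Nf t0) x y t)
                       (fun t => Sh p1 q1 p2 q2 r1 r2 (MLf t0) (NLf t0) x y t)).
  - generalize (loc_MN t0). apply filter_imp. intros t [A B].
    destruct (Rle_lt_dec t0 t) as [H|H].
    + left. destruct (A H) as [-> ->]. auto.
    + right. destruct (B H) as [-> ->]. auto.
  - reflexivity.
  - apply Sh_branch_eq; intros; [apply J1|apply J2]; auto.
  - apply Br.
  - rewrite <- Sh_branch_eq; [apply Br| |]; intros; [apply J1|apply J2]; auto.
Qed.


Section Cont.
Context {U : UniformSpace}.
Lemma cR_plus (f g : U -> R) p : continuous f p -> continuous g p -> continuous (fun q => f q + g q) p.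
Proof. intros; exact (continuous_plus (V:=R_NormedModule) f g p H H0). Qed.
Lemma cR_mult (f g : U -> R) p : continuous f p -> continuous g p -> continuous (fun q => f q * g q) p.
Proof. intros; exact (continuous_mult (K:=R_AbsRing) f g p H H0). Qed.
Lemma cR_opp (f : U -> R) p : continuous f p -> continuous (fun q => - f q) p.
Proof. intros; exact (continuous_opp (V:=R_NormedModule) f p H). Qed.
Lemma cR_minus (f g : U -> R) p : continuous f p -> continuous g p -> continuous (fun q => f q - g q) p.
Proof. intros. unfold Rminus. apply cR_plus; auto. apply cR_opp; auto. Qed.
Lemma cR_comp (f : U -> R) (h : R -> R) p : continuous f p -> continuous h (f p) -> continuous (fun q => h (f q)) p.
Proof. intros; exact (continuous_comp f h p H H0). Qed.
Lemma cR_inv (f : U -> R) p : continuous f p -> f p <> 0 -> continuous (fun q => / f q) p.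
Proof. intros. apply (cR_comp f Rinv); auto. apply continuous_Rinv; auto. Qed.
Lemma cR_const (c : R) p : continuous (fun _ : U => c) p.
Proof. apply continuous_const. Qed.
Lemma cC_pair (f g : U -> R) p : continuous f p -> continuous g p -> continuous (fun q => ((f q, g q) : C)) p.
Proof.
  intros Hf Hg.
  apply (continuous_comp_2 f g (fun a b => ((a, b) : C))); auto.
  apply (filterlim_ext (fun z : R * R => z)). intros [a b]; reflexivity.
  apply continuous_id.
Qed.
End Cont.

Lemma cR_fun (h : R -> R) x : (forall x, ex_derive h x) -> continuous h x.
Proof. intros H. apply (ex_derive_continuous (K:=R_AbsRing) (V:=R_NormedModule)). auto. Qed.

Lemma c_x (x y t : R) : continuous (fun p : R * R * R => fst (fst p)) (x, y, t).
Proof. apply (continuous_comp (U:=prod_UniformSpace (prod_UniformSpace R_UniformSpace R_UniformSpace) R_UniformSpace) fst fst). apply continuous_fst. apply continuous_fst. Qed.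
Lemma c_y (x y t : R) : continuous (fun p : R * R * R => snd (fst p)) (x, y, t).
Proof. apply (continuous_comp (U:=prod_UniformSpace (prod_UniformSpace R_UniformSpace R_UniformSpace) R_UniformSpace) fst snd). apply continuous_fst. apply continuous_snd. Qed.
Lemma c_t (x y t : R) : continuous (fun p : R * R * R => snd p) (x, y, t).
Proof. apply continuous_snd. Qed.

Definition rc3 (g : R -> R -> R -> R) : Prop :=
  forall x y t : R, continuous (fun p : R * R * R => g (fst (fst p)) (snd (fst p)) (snd p)) (x, y, t).

Lemma rc3_pair (g1 g2 : R -> R -> R -> R) : rc3 g1 -> rc3 g2 -> cont3 (fun x y t => (g1 x y t, g2 x y t)).
Proof. intros H1 H2 x y t. apply cC_pair; auto. Qed.
Lemma rc3_fst (f : fun3) : cont3 f -> rc3 (fun x y t => fst (f x y t)).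
Proof. intros H x y t. apply (continuous_comp _ fst). apply H. apply continuous_fst. Qed.
Lemma rc3_snd (f : fun3) : cont3 f -> rc3 (fun x y t => snd (f x y t)).
Proof. intros H x y t. apply (continuous_comp _ snd). apply H. apply continuous_snd. Qed.

Lemma Sh_cont p1 q1 p2 q2 r1 r2 :
  (forall t, continuous r1 t) -> (forall t, continuous r2 t) ->
  (forall t, MLf t <> Mf t -> r1 t = 0) -> (forall t, NLf t <> Nf t -> r2 t = 0) ->
  cont3 (Gl (Sh p1 q1 p2 q2 r1 r2)).
Proof.
  intros C1 C2 J1 J2 x y t0.
  assert (Br : forall m n, continuous (fun p : R * R * R => Sh p1 q1 p2 q2 r1 r2 m n (fst (fst p)) (snd (fst p)) (snd p)) (x, y, t0)).
  { intros m n. unfold Sh.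
    assert (Hx : forall h : R -> R, (forall z, ex_derive h z) -> continuous (fun p : R * R * R => h (fst (fst p))) (x, y, t0)).
    { intros h Hh. apply cR_comp. apply c_x. apply cR_fun; auto. }
    assert (Hy : forall h : R -> R, (forall z, ex_derive h z) -> continuous (fun p : R * R * R => h (snd (fst p))) (x, y, t0)).
    { intros h Hh. apply cR_comp. apply c_y. apply cR_fun; auto. }
    assert (Ht : forall h : R -> R, (forall z, continuous h z) -> continuous (fun p : R * R * R => h (snd p)) (x, y, t0)).
    { intros h Hh. apply cR_comp. apply c_t. auto. }
    apply cC_pair; repeat first [apply cR_minus | apply cR_plus | apply cR_opp | apply cR_mult | apply cR_const];
      first [ apply Ht; auto
            | apply (Hx (fun z => cos (m * z))); intros; auto_derive; auto
            | apply (Hx (fun z => sin (m * z))); intros; auto_derive; auto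
            | apply (Hy (fun z => cos (n * z))); intros; auto_derive; auto
            | apply (Hy (fun z => sin (n * z))); intros; auto_derive; auto]. }
  unfold Gl.
  apply (cont_glue _ (fun p : R * R * R => Sh p1 q1 p2 q2 r1 r2 (Mf t0) (Nf t0) (fst (fst p)) (snd (fst p)) (snd p))
                     (fun p : R * R * R => Sh p1 q1 p2 q2 r1 r2 (MLf t0) (NLf t0) (fst (fst p)) (snd (fst p)) (snd p))).
  - generalize (locally_snd x y t0 _ (loc_MN t0)). apply filter_imp. intros p [A B].
    destruct (Rle_lt_dec t0 (snd p)) as [Hh|Hh].
    + left. destruct (A Hh) as [-> ->]. auto.
    + right. destruct (B Hh) as [-> ->]. auto.
  - reflexivity.
  - simpl. apply Sh_branch_eq; auto.
  - apply Br.
  - apply Br.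
Qed.


Lemma Ab_add a b A B : Rabs a <= A -> Rabs b <= B -> Rabs (a + b) <= A + B.
Proof. intros; eapply Rle_trans; [apply Rabs_triang|lra]. Qed.
Lemma Ab_sub a b A B : Rabs a <= A -> Rabs b <= B -> Rabs (a - b) <= A + B.
Proof. intros; eapply Rle_trans; [apply Rabs_triang|]. rewrite Rabs_Ropp. lra. Qed.
Lemma Ab_mul a b A B : Rabs a <= A -> Rabs b <= B -> Rabs (a * b) <= A * B.
Proof. intros. rewrite Rabs_mult. apply Rmult_le_compat; auto; apply Rabs_pos. Qed.
Lemma Ab_opp a A : Rabs a <= A -> Rabs (- a) <= A.
Proof. rewrite Rabs_Ropp; auto. Qed.
Lemma Ab_pow a A n : Rabs a <= A -> Rabs (a ^ n) <= A ^ n.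
Proof. intros. rewrite <- RPow_abs. apply pow_incr. split; auto. apply Rabs_pos. Qed.
Lemma Ab_self a : 0 <= a -> Rabs a <= a.
Proof. intros; rewrite Rabs_right; lra. Qed.
Lemma Ab_cc t : Rabs (cc t) <= 1.
Proof. unfold cc. apply Rabs_le. apply COS_bound. Qed.
Lemma Ab_ss t : Rabs (ss t) <= 1.
Proof. unfold ss. apply Rabs_le. apply SIN_bound. Qed.

Lemma om_pos : 0 < om.
Proof. unfold om. pose proof PI_RGT_0. lra. Qed.
Lemma om_le2 : om <= 2.
Proof. unfold om. pose proof PI_4. lra. Qed.
Lemma th_gt1 t : 1 < th t.
Proof. unfold th. pose proof (exp_pos t). lra. Qed.
Lemma exp_th t : exp t = th t - 1.
Proof. unfold th. ring. Qed.
Lemma GG_pos t : 0 < GG t.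
Proof. unfold GG. apply exp_pos. Qed.

Lemma Ab_e t : Rabs (exp t) <= th t.
Proof. rewrite Rabs_right. unfold th; lra. apply Rle_ge, Rlt_le, exp_pos. Qed.
Lemma Ab_om : Rabs om <= 2.
Proof. rewrite Rabs_right. apply om_le2. apply Rle_ge, Rlt_le, om_pos. Qed.
Lemma Ab_th t : Rabs (th t) <= th t.
Proof. apply Ab_self. pose proof (th_gt1 t); lra. Qed.
Lemma Ab_G t : Rabs (GG t) <= GG t.
Proof. apply Ab_self. apply Rlt_le, GG_pos. Qed.

Definition Bd t := 91 * th t ^ 4 * GG t.
Ltac ab := repeat first [ apply Ab_cc | apply Ab_ss | apply Ab_G | apply Ab_th | apply Ab_om | apply Ab_e
                        | apply Ab_opp | eapply Ab_add | eapply Ab_sub | eapply Ab_mul | eapply Ab_pow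
                        | apply Ab_self ].
Ltac fin t := pose proof (th_gt1 t); pose proof (GG_pos t);
  assert (1 <= th t) by lra;
  assert (GG t * th t >= GG t) by nra;
  assert (GG t * th t ^ 2 >= GG t * th t) by nra;
  assert (GG t * th t ^ 3 >= GG t * th t ^ 2) by nra;
  assert (GG t * th t ^ 4 >= GG t * th t ^ 3) by nra;
  unfold Bd; ring_simplify; lra.
Ltac pos := first [ apply Rlt_le, exp_pos | apply Rlt_le, om_pos | apply Rlt_le, GG_pos
                  | apply Rlt_le, Rlt_trans with 1; [lra | apply th_gt1] | lra ].


Lemma bnd_gen t : forall E, (Rabs E <= Bd t) -> Rabs E <= Bd t.
Proof. auto. Qed.

Lemma b_ra t : Rabs (ra t) <= Bd t.
Proof.
  eapply Rle_trans. unfold ra. ab; pos. fin t.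
Qed.
Lemma b_ra1 t : Rabs (ra1 t) <= Bd t.
Proof. eapply Rle_trans. unfold ra1, Pa. ab; pos. fin t. Qed.
Lemma b_ra2 t : Rabs (ra2 t) <= Bd t.
Proof. eapply Rle_trans. unfold ra2, Pa, Pa'. ab; pos. fin t. Qed.
Lemma b_rb t : Rabs (rb t) <= Bd t.
Proof. eapply Rle_trans. unfold rb. ab; pos. fin t. Qed.
Lemma b_rb1 t : Rabs (rb1 t) <= Bd t.
Proof. eapply Rle_trans. unfold rb1, Pb. ab; pos. fin t. Qed.
Lemma b_rb2 t : Rabs (rb2 t) <= Bd t.
Proof. eapply Rle_trans. unfold rb2, Pb, Pb'. ab; pos. fin t. Qed.


Lemma Mf_b t : th t - 1 < Mf t <= th t + 1 /\ 2 <= Mf t.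
Proof.
  unfold Mf. pose proof (fl_spec ((th t + 1) / 2)) as [H1 H2].
  pose proof (th_gt1 t).
  assert (0 < IZR (fl ((th t + 1) / 2))) by lra.
  apply lt_0_IZR in H0. assert (1 <= IZR (fl ((th t + 1) / 2))) by (apply IZR_le; lia).
  lra.
Qed.
Lemma Nf_b t : th t - 1 < Nf t <= th t + 1 /\ 1 <= Nf t.
Proof.
  unfold Nf. pose proof (fl_spec (th t / 2)) as [H1 H2].
  pose proof (th_gt1 t).
  assert (-1 < IZR (fl (th t / 2))) by lra.
  apply lt_IZR in H0. assert (0 <= IZR (fl (th t / 2))) by (apply IZR_le; lia).
  lra.
Qed.
Lemma Mf_int t : exists k : nat, Mf t = INR k.
Proof.
  pose proof (Mf_b t) as [_ H]. unfold Mf in *.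
  set (z := fl ((th t + 1) / 2)) in *.
  assert (0 <= IZR z) by lra. apply le_IZR in H0.
  exists (Z.to_nat (2 * z)). rewrite INR_IZR_INZ, Z2Nat.id by lia.
  rewrite mult_IZR. reflexivity.
Qed.
Lemma Nf_int t : exists k : nat, Nf t = INR k.
Proof.
  pose proof (Nf_b t) as [_ H]. unfold Nf in *.
  set (z := fl (th t / 2)) in *.
  assert (0 <= IZR z) by lra. apply le_IZR in H0.
  exists (Z.to_nat (2 * z + 1)). rewrite INR_IZR_INZ, Z2Nat.id by lia.
  rewrite plus_IZR, mult_IZR. reflexivity.
Qed.

Lemma per_cs (m x : R) : (exists k : nat, m = INR k) ->
  cos (m * (x + 2 * PI)) = cos (m * x) /\ sin (m * (x + 2 * PI)) = sin (m * x).
Proof.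
  intros [k ->].
  replace (INR k * (x + 2 * PI)) with (INR k * x + 2 * INR k * PI) by ring.
  split; [apply cos_period | apply sin_period].
Qed.

Lemma Sh_periodic p1 q1 p2 q2 r1 r2 : periodic2 (Gl (Sh p1 q1 p2 q2 r1 r2)).
Proof.
  intros x y t. unfold Gl, Sh.
  destruct (per_cs (Mf t) x (Mf_int t)) as [A1 A2].
  destruct (per_cs (Nf t) y (Nf_int t)) as [B1 B2].
  rewrite A1, A2, B1, B2. auto.
Qed.

Lemma Cmod_le_pair a b w : 0 <= w -> a * a + b * b <= w * w -> Cmod (a, b) <= w.
Proof.
  intros Hw H. unfold Cmod. simpl.
  rewrite <- (sqrt_square w) by auto. apply sqrt_le_1_alt. lra.
Qed.

Lemma Sh_cmod p1 q1 p2 q2 r1 r2 m n x y t :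
  Cmod (Sh p1 q1 p2 q2 r1 r2 m n x y t) <=
  Rabs (r1 t) * (Rabs (p1 m) + Rabs (q1 m)) + Rabs (r2 t) * (Rabs (p2 n) + Rabs (q2 n)).
Proof.
  assert (E : Sh p1 q1 p2 q2 r1 r2 m n x y t =
    Cplus (r1 t * (p1 m * cos (m*x) - q1 m * sin (m*x)), r1 t * (p1 m * sin (m*x) + q1 m * cos (m*x)))
          (r2 t * (p2 n * cos (n*y) - q2 n * sin (n*y)), r2 t * (p2 n * sin (n*y) + q2 n * cos (n*y)))).
  { reflexivity. }
  rewrite E. eapply Rle_trans. apply Cmod_triangle.
  assert (K : forall r p q a, Cmod (r * (p * cos a - q * sin a), r * (p * sin a + q * cos a)) <= Rabs r * (Rabs p + Rabs q)).
  { intros r p q a. apply Cmod_le_pair.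
    apply Rmult_le_pos; [apply Rabs_pos | pose proof (Rabs_pos p); pose proof (Rabs_pos q); lra].
    pose proof (sin2_cos2 a). unfold Rsqr in H.
    replace ((r * (p * cos a - q * sin a)) * (r * (p * cos a - q * sin a)) +
             (r * (p * sin a + q * cos a)) * (r * (p * sin a + q * cos a)))
      with (r * r * (p * p + q * q) * (sin a * sin a + cos a * cos a)) by ring.
    rewrite H, Rmult_1_r.
    assert (SQ : forall z, z * z = Rabs z * Rabs z).
    { intro z. rewrite <- Rabs_mult. rewrite Rabs_right; nra. }
    rewrite (SQ r), (SQ p), (SQ q).
    pose proof (Rabs_pos r); pose proof (Rabs_pos p); pose proof (Rabs_pos q).
    assert (0 <= Rabs r * Rabs r * (Rabs p * Rabs q)) by (apply Rmult_le_pos; apply Rmult_le_pos; auto).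
    nra. }
  apply Rplus_le_compat; apply K.
Qed.


Lemma GG_exp t : GG t * exp (th t * th t / 2) = 1.
Proof. unfold GG. rewrite <- exp_plus. replace (- (th t * th t) / 2 + th t * th t / 2) with 0 by field. apply exp_0. Qed.

Lemma th6G t : th t ^ 6 * GG t <= 216.
Proof.
  pose proof (GG_exp t) as E. pose proof (GG_pos t).
  set (w := th t * th t / 6).
  assert (Ew : exp (th t * th t / 2) = exp w * exp w * exp w).
  { rewrite <- !exp_plus. f_equal. unfold w. field. }
  assert (Hw : 0 <= w) by (unfold w; nra).
  assert (He : w <= exp w) by (pose proof (exp_ineq1_le w); lra).
  assert (T : th t ^ 6 = 216 * (w * w * w)) by (unfold w; field).
  rewrite T. rewrite Ew in E.
  assert (w * w * w <= exp w * exp w * exp w).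
  { apply Rmult_le_compat; try nra; apply Rmult_le_compat; nra. }
  nra.
Qed.

Lemma Sh_bounded p1 q1 p2 q2 r1 r2 :
  (forall t, Rabs (r1 t) <= Bd t) -> (forall t, Rabs (r2 t) <= Bd t) ->
  (forall t, Rabs (p1 (Mf t)) + Rabs (q1 (Mf t)) <= 4 * (th t * th t)) ->
  (forall t, Rabs (p2 (Nf t)) + Rabs (q2 (Nf t)) <= 4 * (th t * th t)) ->
  bounded_half (Gl (Sh p1 q1 p2 q2 r1 r2)).
Proof.
  intros H1 H2 H3 H4. exists (728 * 216). intros x y t _.
  unfold Gl. eapply Rle_trans. apply Sh_cmod.
  pose proof (th6G t). unfold Bd in *.
  pose proof (GG_pos t).
  assert (A : Rabs (r1 t) * (Rabs (p1 (Mf t)) + Rabs (q1 (Mf t))) <= 91 * th t ^ 4 * GG t * (4 * (th t * th t))).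
  { apply Rmult_le_compat; auto; try apply Rabs_pos. pose proof (Rabs_pos (p1 (Mf t))); pose proof (Rabs_pos (q1 (Mf t))); lra. }
  assert (B : Rabs (r2 t) * (Rabs (p2 (Nf t)) + Rabs (q2 (Nf t))) <= 91 * th t ^ 4 * GG t * (4 * (th t * th t))).
  { apply Rmult_le_compat; auto; try apply Rabs_pos. pose proof (Rabs_pos (p2 (Nf t))); pose proof (Rabs_pos (q2 (Nf t))); lra. }
  assert (C : 91 * th t ^ 4 * GG t * (4 * (th t * th t)) = 364 * (th t ^ 6 * GG t)) by ring.
  lra.
Qed.

Definition kone (_ : R) : R := 1.
Definition kzero (_ : R) : R := 0.
Definition kid (m : R) : R := m.
Definition kmsq (m : R) : R := - (m * m).

Lemma coefM_gen t : 1 <= th t -> forall m, 0 <= m <= th t + 1 ->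
  Rabs m <= 4 * (th t * th t) /\ Rabs (- (m * m)) <= 4 * (th t * th t) /\ 1 <= 4 * (th t * th t).
Proof.
  intros Ht m Hm. rewrite Rabs_Ropp. rewrite !Rabs_right by nra.
  repeat split; nra.
Qed.

Ltac coefs t :=
  pose proof (th_gt1 t); pose proof (Mf_b t); pose proof (Nf_b t);
  first [ destruct (coefM_gen t ltac:(lra) (Mf t) ltac:(lra)) as [? [? ?]]
        | idtac ];
  destruct (coefM_gen t ltac:(lra) (Nf t) ltac:(lra)) as [? [? ?]];
  unfold kone, kzero, kid, kmsq; rewrite ?Rabs_R0, ?Rabs_R1; lra.


Definition U := Gl (Sh kone kzero kone kzero ra rb).
Definition UX := Gl (Sh kzero kid kzero kzero ra rb).
Definition UY := Gl (Sh kzero kzero kzero kid ra rb).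
Definition UT := Gl (Sh kone kzero kone kzero ra1 rb1).
Definition UXX := Gl (Sh kmsq kzero kzero kzero ra rb).
Definition UYY := Gl (Sh kzero kzero kmsq kzero ra rb).
Definition UXY := Gl (Sh kzero kzero kzero kzero ra rb).
Definition UXT := Gl (Sh kzero kid kzero kzero ra1 rb1).
Definition UYT := Gl (Sh kzero kzero kzero kid ra1 rb1).
Definition UTT := Gl (Sh kone kzero kone kzero ra2 rb2).

Lemma c_ra t : continuous ra t.
Proof. apply cR_fun. intro; eexists; apply d_ra. Qed.
Lemma c_ra1 t : continuous ra1 t.
Proof. apply cR_fun. intro; eexists; apply d_ra1. Qed.
Lemma c_ra2 t : continuous ra2 t.
Proof. apply cR_fun. intro. unfold ra2, Pa, Pa', GG, cc, ss, th. auto_derive. auto. Qed.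
Lemma c_rb t : continuous rb t.
Proof. apply cR_fun. intro; eexists; apply d_rb. Qed.
Lemma c_rb1 t : continuous rb1 t.
Proof. apply cR_fun. intro; eexists; apply d_rb1. Qed.
Lemma c_rb2 t : continuous rb2 t.
Proof. apply cR_fun. intro. unfold rb2, Pb, Pb', GG, cc, ss, th. auto_derive. auto. Qed.

Lemma ja t : MLf t <> Mf t -> ra t = 0 /\ ra1 t = 0 /\ ra2 t = 0.
Proof. intros H. apply van_a, jumpM, H. Qed.
Lemma jb t : NLf t <> Nf t -> rb t = 0 /\ rb1 t = 0 /\ rb2 t = 0.
Proof. intros H. apply van_b, jumpN, H. Qed.

Ltac jmp := first [ intros t Ht; destruct (ja t Ht) as [? [? ?]]; auto
                  | intros t Ht; destruct (jb t Ht) as [? [? ?]]; auto ].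

Ltac dxy := first [ apply Sh_dx | apply Sh_dy ]; intros; unfold kone, kzero, kid, kmsq; ring.
Ltac dt := apply Sh_dt; [ apply d_ra | apply d_rb | apply d_ra1 | apply d_rb1 | jmp | jmp ].

Lemma p_ux : is_partial 0 U UX.  Proof. dxy. Qed.
Lemma p_uy : is_partial 1 U UY.  Proof. dxy. Qed.
Lemma p_ut : is_partial 2 U UT.
Proof. apply Sh_dt; [apply d_ra | apply d_rb | jmp | jmp]. Qed.
Lemma p_uxx : is_partial 0 UX UXX. Proof. dxy. Qed.
Lemma p_uxy : is_partial 1 UX UXY. Proof. dxy. Qed.
Lemma p_uxt : is_partial 2 UX UXT.
Proof. apply Sh_dt; [apply d_ra | apply d_rb | jmp | jmp]. Qed.
Lemma p_uyx : is_partial 0 UY UXY. Proof. dxy. Qed.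
Lemma p_uyy : is_partial 1 UY UYY. Proof. dxy. Qed.
Lemma p_uyt : is_partial 2 UY UYT.
Proof. apply Sh_dt; [apply d_ra | apply d_rb | jmp | jmp]. Qed.
Lemma p_utx : is_partial 0 UT UXT. Proof. dxy. Qed.
Lemma p_uty : is_partial 1 UT UYT. Proof. dxy. Qed.
Lemma p_utt : is_partial 2 UT UTT.
Proof. apply Sh_dt; [apply d_ra1 | apply d_rb1 | jmp | jmp]. Qed.

Ltac cnt := apply Sh_cont;
  [ first [apply c_ra | apply c_ra1 | apply c_ra2]
  | first [apply c_rb | apply c_rb1 | apply c_rb2] | jmp | jmp ].

Ltac bnd := apply Sh_bounded;
  [ first [apply b_ra | apply b_ra1 | apply b_ra2]
  | first [apply b_rb | apply b_rb1 | apply b_rb2] | let t := fresh "t" in intro t; coefs t | let t := fresh "t" in intro t; coefs t ].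

Lemma cb_all : forall f, In f [U; UX; UY; UT; UXX; UYY; UXY; UXT; UYT; UTT] -> cont3 f /\ bounded_half f /\ periodic2 f.
Proof.
  intros f Hf. simpl in Hf.
  repeat destruct Hf as [<- | Hf]; try contradiction.
  all: split; [cnt | split; [bnd | apply Sh_periodic]].
Qed.


Lemma cs1 t : cc t * cc t + ss t * ss t = 1.
Proof. unfold cc, ss. pose proof (sin2_cos2 (om * th t)). unfold Rsqr in H. lra. Qed.

Lemma c8 t : 1 <= 8 * (cc t ^ 8 + ss t ^ 8).
Proof.
  pose proof (cs1 t). set (u := cc t * cc t) in *. set (v := ss t * ss t) in *.
  assert (E1 : cc t ^ 8 = u ^ 4) by (unfold u; ring).
  assert (E2 : ss t ^ 8 = v ^ 4) by (unfold v; ring).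
  rewrite E1, E2.
  assert (u * u + v * v >= 1/2) by (pose proof (pow2_ge_0 (u - v)); nra).
  assert (2 * (u^4 + v^4) >= (u*u+v*v)^2) by (pose proof (pow2_ge_0 (u*u - v*v)); nra).
  assert ((u*u+v*v)^2 >= 1/4) by nra. lra.
Qed.

Lemma c6 t : cc t ^ 6 <= 1 /\ ss t ^ 6 <= 1.
Proof.
  pose proof (cs1 t). split.
  - assert (cc t * cc t <= 1) by nra. assert (0 <= cc t * cc t) by nra.
    replace (cc t ^ 6) with ((cc t * cc t) * (cc t * cc t) * (cc t * cc t)) by ring.
    assert ((cc t * cc t) * (cc t * cc t) <= 1) by nra. nra.
  - assert (ss t * ss t <= 1) by nra. assert (0 <= ss t * ss t) by nra.
    replace (ss t ^ 6) with ((ss t * ss t) * (ss t * ss t) * (ss t * ss t)) by ring.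
    assert ((ss t * ss t) * (ss t * ss t) <= 1) by nra. nra.
Qed.

Definition Dr t := (Mf t * ra t) ^ 2 + (Nf t * rb t) ^ 2.

Lemma A_bound t : (ra1 t + Mf t * Mf t * ra t) ^ 2 <= 4608 * Dr t.
Proof.
  pose proof (th_gt1 t) as Ht. pose proof (Mf_b t) as HM. pose proof (GG_pos t) as HG.
  set (W := cc t * (Mf t * Mf t - th t * exp t) - 4 * om * exp t * ss t).
  assert (Eq : ra1 t + Mf t * Mf t * ra t = GG t * cc t ^ 3 * W).
  { unfold W, ra1, ra, Pa. ring. }
  assert (HA : Rabs (Mf t * Mf t - th t * exp t) <= 3 * th t + 1).
  { rewrite exp_th. apply Rabs_le. split; nra. }
  assert (HW : Rabs W <= 12 * th t).
  { unfold W. eapply Rle_trans. eapply Ab_sub. eapply Ab_mul. apply Ab_cc. apply HA.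
    eapply Ab_mul. eapply Ab_mul. eapply Ab_mul. apply Ab_self; lra. apply Ab_om. apply Ab_e. apply Ab_ss. lra. }
  assert (HW2 : W * W <= 144 * (th t * th t)).
  { assert (W * W = Rabs W * Rabs W) by (rewrite <- Rabs_mult; rewrite Rabs_right; nra).
    pose proof (Rabs_pos W). nra. }
  rewrite Eq.
  pose proof (c8 t). pose proof (c6 t) as [C6 _].
  assert (0 <= cc t ^ 6) by (replace (cc t ^ 6) with ((cc t ^ 3) ^ 2) by ring; apply pow2_ge_0).
  assert (Step1 : (GG t * cc t ^ 3 * W) ^ 2 <= GG t ^ 2 * cc t ^ 6 * (144 * (th t * th t))).
  { replace ((GG t * cc t ^ 3 * W) ^ 2) with (GG t ^ 2 * cc t ^ 6 * (W * W)) by ring.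
    apply Rmult_le_compat_l; auto. apply Rmult_le_pos; auto. apply pow2_ge_0. }
  assert (Step2 : GG t ^ 2 * cc t ^ 6 <= GG t ^ 2 * (8 * (cc t ^ 8 + ss t ^ 8))).
  { apply Rmult_le_compat_l. apply pow2_ge_0. lra. }
  assert (T1 : th t * th t <= 4 * (Mf t * Mf t)) by nra.
  pose proof (Nf_b t) as HN.
  assert (T2 : th t * th t <= 4 * (Nf t * Nf t)) by nra.
  unfold Dr, ra, rb.
  assert (0 <= GG t ^ 2 * cc t ^ 8) by (apply Rmult_le_pos; [apply pow2_ge_0 | replace (cc t ^ 8) with ((cc t ^ 4)^2) by ring; apply pow2_ge_0]).
  assert (0 <= GG t ^ 2 * ss t ^ 8) by (apply Rmult_le_pos; [apply pow2_ge_0 | replace (ss t ^ 8) with ((ss t ^ 4)^2) by ring; apply pow2_ge_0]).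
  assert (0 <= th t * th t) by nra.
  nra.
Qed.

Lemma B_bound t : (rb1 t + Nf t * Nf t * rb t) ^ 2 <= 4608 * Dr t.
Proof.
  pose proof (th_gt1 t) as Ht. pose proof (Nf_b t) as HM. pose proof (GG_pos t) as HG.
  set (W := ss t * (Nf t * Nf t - th t * exp t) + 4 * om * exp t * cc t).
  assert (Eq : rb1 t + Nf t * Nf t * rb t = GG t * ss t ^ 3 * W).
  { unfold W, rb1, rb, Pb. ring. }
  assert (HA : Rabs (Nf t * Nf t - th t * exp t) <= 3 * th t + 1).
  { rewrite exp_th. apply Rabs_le. split; nra. }
  assert (HW : Rabs W <= 12 * th t).
  { unfold W. eapply Rle_trans. eapply Ab_add. eapply Ab_mul. apply Ab_ss. apply HA.
    eapply Ab_mul. eapply Ab_mul. eapply Ab_mul. apply Ab_self; lra. apply Ab_om. apply Ab_e. apply Ab_cc. lra. }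
  assert (HW2 : W * W <= 144 * (th t * th t)).
  { assert (W * W = Rabs W * Rabs W) by (rewrite <- Rabs_mult; rewrite Rabs_right; nra).
    pose proof (Rabs_pos W). nra. }
  rewrite Eq.
  pose proof (c8 t). pose proof (c6 t) as [_ C6].
  assert (0 <= ss t ^ 6) by (replace (ss t ^ 6) with ((ss t ^ 3) ^ 2) by ring; apply pow2_ge_0).
  assert (Step1 : (GG t * ss t ^ 3 * W) ^ 2 <= GG t ^ 2 * ss t ^ 6 * (144 * (th t * th t))).
  { replace ((GG t * ss t ^ 3 * W) ^ 2) with (GG t ^ 2 * ss t ^ 6 * (W * W)) by ring.
    apply Rmult_le_compat_l; auto. apply Rmult_le_pos; auto. apply pow2_ge_0. }
  assert (Step2 : GG t ^ 2 * ss t ^ 6 <= GG t ^ 2 * (8 * (cc t ^ 8 + ss t ^ 8))).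
  { apply Rmult_le_compat_l. apply pow2_ge_0. lra. }
  assert (T2 : th t * th t <= 4 * (Nf t * Nf t)) by nra.
  pose proof (Mf_b t) as HN.
  assert (T1 : th t * th t <= 4 * (Mf t * Mf t)) by nra.
  unfold Dr, ra, rb.
  assert (0 <= GG t ^ 2 * cc t ^ 8) by (apply Rmult_le_pos; [apply pow2_ge_0 | replace (cc t ^ 8) with ((cc t ^ 4)^2) by ring; apply pow2_ge_0]).
  assert (0 <= GG t ^ 2 * ss t ^ 8) by (apply Rmult_le_pos; [apply pow2_ge_0 | replace (ss t ^ 8) with ((ss t ^ 4)^2) by ring; apply pow2_ge_0]).
  assert (0 <= th t * th t) by nra.
  nra.
Qed.

Lemma Dr_pos t : 0 < Dr t.
Proof.
  unfold Dr, ra, rb. pose proof (Mf_b t). pose proof (Nf_b t). pose proof (GG_pos t).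
  pose proof (c8 t).
  assert (0 < (cc t ^ 8 + ss t ^ 8) * (GG t * GG t)) by (apply Rmult_lt_0_compat; nra).
  assert (0 <= cc t ^ 8) by (replace (cc t ^ 8) with ((cc t ^ 4)^2) by ring; apply pow2_ge_0).
  assert (0 <= ss t ^ 8) by (replace (ss t ^ 8) with ((ss t ^ 4)^2) by ring; apply pow2_ge_0).
  assert (Mf t * Mf t >= 1) by nra. assert (Nf t * Nf t >= 1) by nra.
  replace ((Mf t * (cc t ^ 4 * GG t)) ^ 2 + (Nf t * (ss t ^ 4 * GG t)) ^ 2)
    with (Mf t * Mf t * (cc t ^ 8 * (GG t * GG t)) + Nf t * Nf t * (ss t ^ 8 * (GG t * GG t))) by ring.
  assert (0 <= cc t ^ 8 * (GG t * GG t)) by (apply Rmult_le_pos; nra).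
  assert (0 <= ss t ^ 8 * (GG t * GG t)) by (apply Rmult_le_pos; nra).
  nra.
Qed.


Definition Nq : fun3 := fun x y t =>
  (fst (UT x y t) - fst (UXX x y t) - fst (UYY x y t), snd (UT x y t) - snd (UXX x y t) - snd (UYY x y t)).
Definition Dn (x y t : R) : R :=
  fst (UX x y t) * fst (UX x y t) + snd (UX x y t) * snd (UX x y t)
  + fst (UY x y t) * fst (UY x y t) + snd (UY x y t) * snd (UY x y t).
Definition BB1 : fun3 := fun x y t =>
  ((fst (Nq x y t) * fst (UX x y t) + snd (Nq x y t) * snd (UX x y t)) * / Dn x y t,
   (snd (Nq x y t) * fst (UX x y t) - fst (Nq x y t) * snd (UX x y t)) * / Dn x y t).
Definition BB2 : fun3 := fun x y t =>
  ((fst (Nq x y t) * fst (UY x y t) + snd (Nq x y t) * snd (UY x y t)) * / Dn x y t,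
   (snd (Nq x y t) * fst (UY x y t) - fst (Nq x y t) * snd (UY x y t)) * / Dn x y t).

Lemma scs a : sin a * sin a + cos a * cos a = 1.
Proof. pose proof (sin2_cos2 a). unfold Rsqr in H. lra. Qed.

Lemma Dn_eq x y t : Dn x y t = Dr t.
Proof.
  unfold Dn, Dr, UX, UY, Gl, Sh, kzero, kid. simpl.
  pose proof (scs (Mf t * x)). pose proof (scs (Nf t * y)).
  transitivity ((Mf t * ra t) ^ 2 * (sin (Mf t * x) * sin (Mf t * x) + cos (Mf t * x) * cos (Mf t * x))
              + (Nf t * rb t) ^ 2 * (sin (Nf t * y) * sin (Nf t * y) + cos (Nf t * y) * cos (Nf t * y))).
  ring. rewrite H, H0. ring.
Qed.

Lemma Dn_pos x y t : 0 < Dn x y t.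
Proof. rewrite Dn_eq. apply Dr_pos. Qed.

Lemma Nq_eq x y t :
  Nq x y t = ((ra1 t + Mf t * Mf t * ra t) * cos (Mf t * x) + (rb1 t + Nf t * Nf t * rb t) * cos (Nf t * y),
              (ra1 t + Mf t * Mf t * ra t) * sin (Mf t * x) + (rb1 t + Nf t * Nf t * rb t) * sin (Nf t * y)).
Proof.
  unfold Nq, UT, UXX, UYY, Gl, Sh, kzero, kone, kmsq. simpl. f_equal; ring.
Qed.

Lemma NN_bound x y t :
  fst (Nq x y t) * fst (Nq x y t) + snd (Nq x y t) * snd (Nq x y t) <= 18432 * Dn x y t.
Proof.
  rewrite Nq_eq, Dn_eq. simpl.
  pose proof (A_bound t). pose proof (B_bound t).
  set (a := ra1 t + Mf t * Mf t * ra t) in *. set (b := rb1 t + Nf t * Nf t * rb t) in *.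
  pose proof (scs (Mf t * x)). pose proof (scs (Nf t * y)).
  set (c1 := cos (Mf t * x)) in *. set (s1 := sin (Mf t * x)) in *.
  set (c2 := cos (Nf t * y)) in *. set (s2 := sin (Nf t * y)) in *.
  assert ((a * c1 + b * c2) * (a * c1 + b * c2) <= 2 * (a*a*(c1*c1)) + 2 * (b*b*(c2*c2)))
    by (pose proof (pow2_ge_0 (a * c1 - b * c2)); nra).
  assert ((a * s1 + b * s2) * (a * s1 + b * s2) <= 2 * (a*a*(s1*s1)) + 2 * (b*b*(s2*s2)))
    by (pose proof (pow2_ge_0 (a * s1 - b * s2)); nra).
  assert (a*a*(c1*c1) + a*a*(s1*s1) = a * a) by (transitivity (a*a*(s1*s1+c1*c1)); [ring | rewrite H1; ring]).
  assert (b*b*(c2*c2) + b*b*(s2*s2) = b * b) by (transitivity (b*b*(s2*s2+c2*c2)); [ring | rewrite H2; ring]).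
  assert (a * a = a ^ 2) by ring. assert (b * b = b ^ 2) by ring.
  lra.
Qed.

Lemma X2_le x y t : fst (UX x y t) * fst (UX x y t) + snd (UX x y t) * snd (UX x y t) <= Dn x y t.
Proof. unfold Dn. pose proof (pow2_ge_0 (fst (UY x y t))). pose proof (pow2_ge_0 (snd (UY x y t))). nra. Qed.
Lemma Y2_le x y t : fst (UY x y t) * fst (UY x y t) + snd (UY x y t) * snd (UY x y t) <= Dn x y t.
Proof. unfold Dn. pose proof (pow2_ge_0 (fst (UX x y t))). pose proof (pow2_ge_0 (snd (UX x y t))). nra. Qed.

Lemma Bgen_bound (n1 n2 x1 x2 D : R) :
  0 < D -> n1 * n1 + n2 * n2 <= 18432 * D -> x1 * x1 + x2 * x2 <= D ->
  Cmod ((n1 * x1 + n2 * x2) * / D, (n2 * x1 - n1 * x2) * / D) <= 136.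
Proof.
  intros HD HN HX. apply Cmod_le_pair. lra.
  assert (E : (n1 * x1 + n2 * x2) * / D * ((n1 * x1 + n2 * x2) * / D) +
              (n2 * x1 - n1 * x2) * / D * ((n2 * x1 - n1 * x2) * / D)
            = (n1 * n1 + n2 * n2) * (x1 * x1 + x2 * x2) * / (D * D)) by (field; lra).
  rewrite E.
  assert (0 <= n1 * n1 + n2 * n2) by nra. assert (0 <= x1 * x1 + x2 * x2) by nra.
  assert ((n1 * n1 + n2 * n2) * (x1 * x1 + x2 * x2) <= 18432 * D * D).
  { replace (18432 * D * D) with ((18432 * D) * D) by ring. apply Rmult_le_compat; auto. }
  assert (0 < / (D * D)) by (apply Rinv_0_lt_compat; nra).
  apply Rle_trans with (18432 * D * D * / (D * D)).
  apply Rmult_le_compat_r; lra.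
  replace (18432 * D * D * / (D * D)) with 18432 by (field; lra). lra.
Qed.

Lemma B1_bounded : bounded_half BB1.
Proof.
  exists 136. intros x y t _. unfold BB1. apply Bgen_bound.
  apply Dn_pos. apply NN_bound. apply X2_le.
Qed.
Lemma B2_bounded : bounded_half BB2.
Proof.
  exists 136. intros x y t _. unfold BB2. apply Bgen_bound.
  apply Dn_pos. apply NN_bound. apply Y2_le.
Qed.

Lemma equation x y t :
  UT x y t = (UXX x y t + UYY x y t + BB1 x y t * UX x y t + BB2 x y t * UY x y t)%C.
Proof.
  pose proof (Dn_pos x y t) as HD.
  unfold BB1, BB2, Nq. unfold Dn in *.
  destruct (UT x y t) as [t1 t2], (UXX x y t) as [a1 a2], (UYY x y t) as [b1 b2],
           (UX x y t) as [x1 x2], (UY x y t) as [y1 y2].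
  simpl in *. unfold Cplus, Cmult. simpl. f_equal; field; lra.
Qed.


Lemma rc3_plus f g : rc3 f -> rc3 g -> rc3 (fun x y t => f x y t + g x y t).
Proof. intros Hf Hg x y t. apply cR_plus; auto. Qed.
Lemma rc3_minus f g : rc3 f -> rc3 g -> rc3 (fun x y t => f x y t - g x y t).
Proof. intros Hf Hg x y t. apply cR_minus; auto. Qed.
Lemma rc3_mult f g : rc3 f -> rc3 g -> rc3 (fun x y t => f x y t * g x y t).
Proof. intros Hf Hg x y t. apply cR_mult; auto. Qed.
Lemma rc3_inv f : rc3 f -> (forall x y t, f x y t <> 0) -> rc3 (fun x y t => / f x y t).
Proof. intros Hf H x y t. apply cR_inv; auto. Qed.

Lemma cU f : In f [U; UX; UY; UT; UXX; UYY; UXY; UXT; UYT; UTT] -> cont3 f.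
Proof. intros H; apply (cb_all f H). Qed.

Ltac rcleaf := first [ apply (rc3_fst UX) | apply (rc3_snd UX) | apply (rc3_fst UY) | apply (rc3_snd UY)
  | apply (rc3_fst UT) | apply (rc3_snd UT) | apply (rc3_fst UXX) | apply (rc3_snd UXX)
  | apply (rc3_fst UYY) | apply (rc3_snd UYY) ]; apply cU; simpl; tauto.
Ltac rc := repeat first [ rcleaf | apply rc3_minus | apply rc3_plus | apply rc3_mult ].

Lemma rc_Nq1 : rc3 (fun x y t => fst (Nq x y t)).
Proof. unfold Nq. simpl. rc. Qed.
Lemma rc_Nq2 : rc3 (fun x y t => snd (Nq x y t)).
Proof. unfold Nq. simpl. rc. Qed.
Lemma rc_Dinv : rc3 (fun x y t => / Dn x y t).
Proof.
  apply rc3_inv. unfold Dn. rc.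
  intros x y t. pose proof (Dn_pos x y t). lra.
Qed.

Ltac rc' := repeat first [ rcleaf | apply rc_Nq1 | apply rc_Nq2 | apply rc_Dinv
                        | apply rc3_minus | apply rc3_plus | apply rc3_mult ].

Lemma B1_cont : cont3 BB1.
Proof. unfold BB1. apply rc3_pair; rc'. Qed.
Lemma B2_cont : cont3 BB2.
Proof. unfold BB2. apply rc3_pair; rc'. Qed.

Lemma pU f : In f [U; UX; UY; UT; UXX; UYY; UXY; UXT; UYT; UTT] -> periodic2 f.
Proof. intros H; apply (cb_all f H). Qed.

Lemma B1_per : periodic2 BB1.
Proof.
  intros x y t. unfold BB1, Nq, Dn.
  destruct (pU UX ltac:(simpl; tauto) x y t) as [A1 A2].
  destruct (pU UY ltac:(simpl; tauto) x y t) as [BB1' BB2'].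
  destruct (pU UT ltac:(simpl; tauto) x y t) as [C1 C2].
  destruct (pU UXX ltac:(simpl; tauto) x y t) as [D1 D2].
  destruct (pU UYY ltac:(simpl; tauto) x y t) as [E1 E2].
  split; [rewrite A1, BB1', C1, D1, E1 | rewrite A2, BB2', C2, D2, E2]; reflexivity.
Qed.
Lemma B2_per : periodic2 BB2.
Proof.
  intros x y t. unfold BB2, Nq, Dn.
  destruct (pU UX ltac:(simpl; tauto) x y t) as [A1 A2].
  destruct (pU UY ltac:(simpl; tauto) x y t) as [BB1' BB2'].
  destruct (pU UT ltac:(simpl; tauto) x y t) as [C1 C2].
  destruct (pU UXX ltac:(simpl; tauto) x y t) as [D1 D2].
  destruct (pU UYY ltac:(simpl; tauto) x y t) as [E1 E2].
  split; [rewrite A1, BB1', C1, D1, E1 | rewrite A2, BB2', C2, D2, E2]; reflexivity.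
Qed.

Lemma exp_mono a b : a <= b -> exp a <= exp b.
Proof. intros [H|H]. left; apply exp_increasing; auto. subst; lra. Qed.

Lemma c4s4 t : cc t ^ 4 + ss t ^ 4 <= 1 /\ 1/2 <= cc t ^ 4 + ss t ^ 4.
Proof.
  pose proof (cs1 t). set (u := cc t * cc t) in *. set (v := ss t * ss t) in *.
  replace (cc t ^ 4) with (u * u) by (unfold u; ring).
  replace (ss t ^ 4) with (v * v) by (unfold v; ring).
  assert (0 <= u) by (unfold u; nra). assert (0 <= v) by (unfold v; nra).
  split. nra. pose proof (pow2_ge_0 (u - v)). nra.
Qed.

Lemma decay T x y t : T <= t -> Cmod (U x y t) <= exp (- 1 * exp (1 * T)).
Proof.
  intros HT. unfold U, Gl. eapply Rle_trans. apply Sh_cmod.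
  unfold kone, kzero. rewrite Rabs_R1, Rabs_R0.
  unfold ra, rb. pose proof (GG_pos t). pose proof (c4s4 t).
  assert (0 <= cc t ^ 4) by (replace (cc t ^ 4) with ((cc t ^ 2)^2) by ring; apply pow2_ge_0).
  assert (0 <= ss t ^ 4) by (replace (ss t ^ 4) with ((ss t ^ 2)^2) by ring; apply pow2_ge_0).
  rewrite !Rabs_right by nra.
  apply Rle_trans with (GG t). nra.
  unfold GG. apply exp_mono.
  pose proof (exp_mono _ _ HT). unfold th.
  replace (1 * T) with T by ring. pose proof (exp_pos T).
  nra.
Qed.

Lemma u_nonzero : U 0 0 0 <> 0%C.
Proof.
  intros H. apply (f_equal fst) in H. unfold U, Gl, Sh, kone, kzero in H. simpl in H.
  rewrite !Rmult_0_r, cos_0, sin_0 in H.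
  pose proof (c4s4 0). pose proof (GG_pos 0). unfold ra, rb in H. nra.
Qed.


Lemma uC2 : unif_C2 U.
Proof.
  destruct (cb_all U ltac:(simpl; tauto)) as [CU [BU _]].
  split; [exact CU | split; [exact BU |]].
  exists (fun i => match i with 0%nat => UX | 1%nat => UY | _ => UT end).
  exists (fun i j => match i, j with
                     | 0%nat, 0%nat => UXX | 0%nat, 1%nat => UXY | 0%nat, _ => UXT
                     | 1%nat, 0%nat => UXY | 1%nat, 1%nat => UYY | 1%nat, _ => UYT
                     | _, 0%nat => UXT | _, 1%nat => UYT | _, _ => UTT end).
  intros i Hi.
  destruct i as [|[|[|i]]]; try lia;
  (split; [ first [apply p_ux | apply p_uy | apply p_ut] |
   split; [ apply cb_all; simpl; tauto |
   split; [ apply cb_all; simpl; tauto |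
   intros j Hj; destruct j as [|[|[|j]]]; try lia;
   (split; [ first [apply p_uxx | apply p_uxy | apply p_uxt | apply p_uyx | apply p_uyy | apply p_uyt
                   | apply p_utx | apply p_uty | apply p_utt] |
    split; [ apply cb_all; simpl; tauto | apply cb_all; simpl; tauto ]]) ]]]).
Qed.

Theorem theorem1p3 :
  exists (B1 B2 u ux uy ut uxx uyy : fun3),
    periodic2 B1 /\ periodic2 B2 /\ periodic2 u /\
    cont3 B1 /\ cont3 B2 /\ bounded_half B1 /\ bounded_half B2 /\
    unif_C2 u /\
    (exists x y t : R, 0 <= t /\ u x y t <> 0%C) /\
    is_partial 0 u ux /\ is_partial 1 u uy /\ is_partial 2 u ut /\
    is_partial 0 ux uxx /\ is_partial 1 uy uyy /\
    (forall x y t : R, 0 <= t ->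
       ut x y t = (uxx x y t + uyy x y t + B1 x y t * ux x y t + B2 x y t * uy x y t)%C) /\
    (exists c : R, 0 < c /\ exists T0 : R, forall T : R, T0 <= T ->
       forall x y t : R, T <= t -> Cmod (u x y t) <= exp (- c * exp (c * T))).
Proof.
  exists BB1, BB2, U, UX, UY, UT, UXX, UYY.
  split. apply B1_per. split. apply B2_per. split. apply pU; simpl; tauto.
  split. apply B1_cont. split. apply B2_cont. split. apply B1_bounded. split. apply B2_bounded.
  split. apply uC2.
  split. exists 0, 0, 0. split; [lra | ]. exact u_nonzero.
  split. apply p_ux. split. apply p_uy. split. apply p_ut. split. apply p_uxx. split. apply p_uyy.
  split. intros x y t _. apply equation.
  exists 1. split. lra. exists 0. intros T _ x y t HT. apply decay; auto.
Qed.
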